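(* Let $i:B\to A$ be a $k$-linear $X$-functor from a diagonal $k$-linear category $B$ to a $k$-linear category $A$. Let $x,y\in X$ and assume that $A_{xy}$ is flat as a left $B_x$-module. Then for every descent datum $(M,\sigma)\in\underline{\rm Desc}_B(A)$ the map $\varepsilon^M_{xy}:G(M)_x\otimes_{B_x}A_{xy}\to M_{xy}$, $m\otimes_{B_x}a\mapsto ma$, is bijective, where $G(M)_x=\{m\in M_{xx}\mid\sigma_{xx}(m)=m\otimes_{B_x}1_x\}$.
   Context: Let $k$ be a commutative ring; unadorned $\otimes$ is over $k$. A $k$-linear category $A$ with class of objects $X$ consists of $k$-modules $A_{xy}$ ($x,y\in X$), associative $k$-bilinear compositions $A_{xy}\otimes A_{yz}\to A_{xz}$, $a\otimes b\mapsto ab$, and units $1_x\in A_{xx}$. A right $A$-module is a family of $k$-modules $(M_{xy})_{x,y\in X}$ with $k$-linear maps $M_{xy}\otimes A_{yz}\to M_{xz}$, $m\otimes a\mapsto ma$, with $(ma)b=m(ab)$, $m1_y=m$. A diagonal $k$-linear category $B$ is a family of $k$-algebras $(B_x)_{x\in X}$ (with $B_{xy}=0$ for $x\neq y$). A $k$-linear $X$-functor $i:B\to A$ amounts to $k$-algebra morphisms $i_x:B_x\to A_{xx}$; then $A_{xy}$ is a left $B_x$-module and right $B_y$-module by multiplication, and $M_{xy}$ is a right $B_y$-module. A descent datum $(M,\sigma)$ for $i$ is a right $A$-module $M$ with $k$-linear maps $\sigma_{xy}:M_{xy}\to M_{xx}\otimes_{B_x}A_{xy}$, $\sigma_{xy}(m)=m_{<0>}\otimes_{B_x}m_{<1>}$,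 such that for all $m\in M_{xy}$, $a\in A_{yz}$: (i) $\sigma_{xz}(ma)=m_{<0>}\otimes_{B_x}m_{<1>}a$; (ii) $\sigma_{xx}(m_{<0>})\otimes_{B_x}m_{<1>}=m_{<0>}\otimes_{B_x}1_x\otimes_{B_x}m_{<1>}$; (iii) $m_{<0>}m_{<1>}=m$. $\underline{\rm Desc}_B(A)$ denotes the category of descent data. *)

(* Defs.v *)
From HB Require Import structures.
From mathcomp Require Import all_boot all_order all_algebra.
Set Implicit Arguments. Unset Strict Implicit. Unset Printing Implicit Defensive.
Import GRing.Theory.
Local Open Scope ring_scope.

(* Tensor products over a (possibly noncommutative) ring, presented as       *)
(* formal sums (lists of pairs) modulo the congruence generated by the       *)
(* defining relations of the tensor product.  The ring R only enters through *)
(* the two actions.  The predicate P restricts the admissible left factors: *)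
(* for P a sub-R-module of M, the relation restricted to P-lists presents    *)
(* P (x)_R N (NOT its image in M (x)_R N); for P = fun _ => True one gets    *)
(* M (x)_R N itself.                                                         *)
Section Tensor.
Variables (R : Type) (M N : zmodType) (actM : M -> R -> M) (actN : R -> N -> N)
  (P : M -> Prop).

Inductive teq : seq (M * N) -> seq (M * N) -> Prop :=
| teq_refl s : teq s s
| teq_sym s t : teq s t -> teq t s
| teq_trans s t u : teq s t -> teq t u -> teq s u
| teq_cat s1 t1 s2 t2 : teq s1 t1 -> teq s2 t2 -> teq (s1 ++ s2) (t1 ++ t2)
| teq_swap s t : teq (s ++ t) (t ++ s)
| teq_addl m m' n : P m -> P m' -> P (m + m') ->
    teq [:: (m + m', n)] [:: (m, n); (m', n)]
| teq_addr m n n' : P m -> teq [:: (m, n + n')] [:: (m, n); (m, n')]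
| teq_zerol n : P 0 -> teq [:: (0, n)] [::]
| teq_zeror m : P m -> teq [:: (m, 0)] [::]
| teq_bal m r n : P m -> P (actM m r) ->
    teq [:: (actM m r, n)] [:: (m, actN r n)].
End Tensor.

Section Tensor3.
Variables (R S : Type) (M Q N : zmodType) (actM : M -> R -> M)
  (actQl : R -> Q -> Q) (actQr : Q -> S -> Q) (actN : S -> N -> N).

Inductive teq3 : seq (M * Q * N) -> seq (M * Q * N) -> Prop :=
| teq3_refl s : teq3 s s
| teq3_sym s t : teq3 s t -> teq3 t s
| teq3_trans s t u : teq3 s t -> teq3 t u -> teq3 s u
| teq3_cat s1 t1 s2 t2 : teq3 s1 t1 -> teq3 s2 t2 -> teq3 (s1 ++ s2) (t1 ++ t2)
| teq3_swap s t : teq3 (s ++ t) (t ++ s)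
| teq3_add1 m m' q n : teq3 [:: (m + m', q, n)] [:: (m, q, n); (m', q, n)]
| teq3_add2 m q q' n : teq3 [:: (m, q + q', n)] [:: (m, q, n); (m, q', n)]
| teq3_add3 m q n n' : teq3 [:: (m, q, n + n')] [:: (m, q, n); (m, q, n')]
| teq3_zero1 q n : teq3 [:: (0, q, n)] [::]
| teq3_zero2 m n : teq3 [:: (m, 0, n)] [::]
| teq3_zero3 m q : teq3 [:: (m, q, 0)] [::]
| teq3_bal1 m r q n : teq3 [:: (actM m r, q, n)] [:: (m, actQl r q, n)]
| teq3_bal2 m q s n : teq3 [:: (m, actQr q s, n)] [:: (m, q, actN s n)].
End Tensor3.

Record kalg (k : comPzRingType) := KAlg {
  kcar : lmodType k;
  kmul : kcar -> kcar -> kcar;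
  kone : kcar;
  kmulA : forall a b c, kmul a (kmul b c) = kmul (kmul a b) c;
  kmul1l : forall a, kmul kone a = a;
  kmul1r : forall a, kmul a kone = a;
  kmulDl : forall a a' b, kmul (a + a') b = kmul a b + kmul a' b;
  kmulDr : forall a b b', kmul a (b + b') = kmul a b + kmul a b';
  kmulZl : forall (c : k) a b, kmul (c *: a) b = c *: kmul a b;
  kmulZr : forall (c : k) a b, kmul a (c *: b) = c *: kmul a b }.

Record klincat (k : comPzRingType) (X : Type) := KLinCat {
  khom : X -> X -> lmodType k;
  kcomp : forall x y z, khom x y -> khom y z -> khom x z;
  kidm : forall x, khom x x;
  kcompA : forall x y z w (a : khom x y) (b : khom y z) (c : khom z w),
      kcomp (kcomp a b) c = kcomp a (kcomp b c);
  kcomp1l : forall x y (a : khom x y), kcomp (kidm x) a = a;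
  kcomp1r : forall x y (a : khom x y), kcomp a (kidm y) = a;
  kcompDl : forall x y z (a a' : khom x y) (b : khom y z),
      kcomp (a + a') b = kcomp a b + kcomp a' b;
  kcompDr : forall x y z (a : khom x y) (b b' : khom y z),
      kcomp a (b + b') = kcomp a b + kcomp a b';
  kcompZl : forall x y z (c : k) (a : khom x y) (b : khom y z),
      kcomp (c *: a) b = c *: kcomp a b;
  kcompZr : forall x y z (c : k) (a : khom x y) (b : khom y z),
      kcomp a (c *: b) = c *: kcomp a b }.

(* A k-linear X-functor i : B -> A from the diagonal category B = (B_x)_x:
   k-algebra morphisms i_x : B_x -> A_xx. *)
Definition kfunctor (k : comPzRingType) (X : Type) (B : X -> kalg k)
    (A : klincat k X) (i : forall {x}, kcar (B x) -> khom A x x) : Prop :=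
  forall x,
  [/\ forall b b', @i x (b + b') = @i x b + @i x b',
      forall (c : k) b, @i x (c *: b) = c *: @i x b,
      forall b b', @i x (kmul b b') = kcomp (@i x b) (@i x b') &
      @i x (kone (B x)) = kidm A x].

Definition rAmodule (k : comPzRingType) (X : Type) (A : klincat k X)
    (M : X -> X -> lmodType k)
    (ract : forall {x y z}, M x y -> khom A y z -> M x z) : Prop :=
  (forall x y z (m m' : M x y) (a : khom A y z),
        ract (m + m') a = ract m a + ract m' a) /\
  [/\ forall x y z (m : M x y) (a a' : khom A y z),
        ract m (a + a') = ract m a + ract m a',
      forall x y z (c : k) (m : M x y) (a : khom A y z),
        ract (c *: m) a = c *: ract m a,
      forall x y z (c : k) (m : M x y) (a : khom A y z),
        ract m (c *: a) = c *: ract m a,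
      forall x y z w (m : M x y) (a : khom A y z) (b : khom A z w),
        ract (ract m a) b = ract m (kcomp a b) &
      forall x y (m : M x y), ract m (kidm A y) = m].

Section Desc.
Variables (k : comPzRingType) (X : Type) (B : X -> kalg k) (A : klincat k X)
  (i : forall {x}, kcar (B x) -> khom A x x)
  (M : X -> X -> lmodType k)
  (ract : forall {x y z}, M x y -> khom A y z -> M x z).

Definition ractB x y (m : M x y) (b : kcar (B y)) : M x y := ract m (i b).
Definition lactB x y (b : kcar (B x)) (a : khom A x y) : khom A x y :=
  kcomp (i b) a.

Definition teqMA x y := @teq (kcar (B x)) (M x x) (khom A x y)
  (@ractB x x) (@lactB x y) (fun _ => True).

Definition teqMAA x y := @teq3 (kcar (B x)) (kcar (B x)) (M x x) (khom A x x)
  (khom A x y) (@ractB x x) (@lactB x x)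
  (fun (a : khom A x x) b => kcomp a (i b)) (@lactB x y).

(* sigma_xy(m) = m_<0> (x)_{B_x} m_<1>, given by a representative formal sum *)
Definition descent_datum
    (sigma : forall x y, M x y -> seq (M x x * khom A x y)) : Prop :=
  [/\
      forall x y (m m' : M x y),
        teqMA (sigma x y (m + m')) (sigma x y m ++ sigma x y m'),
      forall x y (c : k) (m : M x y),
        teqMA (sigma x y (c *: m))
              [seq (c *: p.1, p.2) | p <- sigma x y m],
      forall x y z (m : M x y) (a : khom A y z),
        teqMA (sigma x z (ract m a))
              [seq (p.1, kcomp p.2 a) | p <- sigma x y m],
      forall x y (m : M x y),
        teqMAA
          (flatten [seq [seq (q.1, q.2, p.2) | q <- sigma x x p.1]
                   | p <- sigma x y m])
          [seq (p.1, kidm A x, p.2) | p <- sigma x y m] &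
      forall x y (m : M x y), \sum_(p <- sigma x y m) ract p.1 p.2 = m].

Definition GM (sigma : forall x y, M x y -> seq (M x x * khom A x y)) x
    (m : M x x) : Prop :=
  teqMA (sigma x x m) [:: (m, kidm A x)].

Definition teqGA sigma x y := @teq (kcar (B x)) (M x x) (khom A x y)
  (@ractB x x) (@lactB x y) (@GM sigma x).

Definition epsM x y (s : seq (M x x * khom A x y)) : M x y :=
  \sum_(p <- s) ract p.1 p.2.

End Desc.

Definition rmod_over (k : comPzRingType) (B : kalg k) (P : zmodType)
    (a : P -> kcar B -> P) : Prop :=
  [/\ forall p p' b, a (p + p') b = a p b + a p' b,
      forall p b b', a p (b + b') = a p b + a p b',
      forall p b b', a p (kmul b b') = a (a p b) b' &
      forall p, a p (kone B) = p].

(* A left B-module N is flat: - (x)_B N preserves injective maps of right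
   B-modules. *)
Definition flat_left (k : comPzRingType) (B : kalg k) (N : zmodType)
    (actN : kcar B -> N -> N) : Prop :=
  forall (P Q : zmodType) (aP : P -> kcar B -> P) (aQ : Q -> kcar B -> Q)
         (f : P -> Q),
    rmod_over aP -> rmod_over aQ ->
    (forall p p', f (p + p') = f p + f p') ->
    (forall p b, f (aP p b) = aQ (f p) b) ->
    injective f ->
    forall s t : seq (P * N),
      teq aQ actN (fun _ => True) [seq (f q.1, q.2) | q <- s]
                                  [seq (f q.1, q.2) | q <- t] ->
      teq aP actN (fun _ => True) s t.

(* Main.v *)
Require Import Defs.
From HB Require Import structures.
From mathcomp Require Import all_boot all_order all_algebra.
From mathcomp Require Import boolp.
Import GRing.Theory.
Local Open Scope ring_scope.

Section TensGen.
Variables (R : Type) (M N : zmodType) (aM : M -> R -> M) (aN : R -> N -> N).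
Local Notation TE := (teq aM aN (fun _ => True)).

Definition tclass := {c : seq (M * N) -> Prop | exists s, c = TE s}.
Definition tpi (s : seq (M * N)) : tclass := exist _ (TE s) (ex_intro _ s erefl).
Definition trepr (c : tclass) : seq (M * N) := projT1 (cid (proj2_sig c)).

Lemma tpi_eq s t : tpi s = tpi t <-> TE s t.
Proof.
split.
  move=> h; have : TE s = TE t by move: h => /(congr1 (@proj1_sig _ _)).
  by move=> e; rewrite e; apply: teq_refl.
move=> h; apply: eq_exist; apply: funext => u; apply: propext; split => hu.
  exact: teq_trans (teq_sym h) hu.
exact: teq_trans h hu.
Qed.

Lemma treprK c : tpi (trepr c) = c.
Proof.
rewrite /trepr; case: (cid _) => s /= e; case: c e => c hc /= e.
by subst c; apply: eq_exist.
Qed.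

Lemma trepr_teq s : TE (trepr (tpi s)) s.
Proof. by apply/tpi_eq; rewrite treprK. Qed.

Definition tzero := tpi [::].
Definition tadd a b := tpi (trepr a ++ trepr b).
Definition tneg (s : seq (M * N)) := [seq (- p.1, p.2) | p <- s].
Definition topp a := tpi (tneg (trepr a)).

Lemma tpi_cat' s t : tpi (s ++ t) = tadd (tpi s) (tpi t).
Proof.
apply/tpi_eq; apply: teq_cat; apply: teq_sym; exact: trepr_teq.
Qed.

Lemma tclassP (c : tclass) : exists s, c = tpi s.
Proof. by exists (trepr c); rewrite treprK. Qed.

Lemma teq_midswap s t u : TE (s ++ t ++ u) (t ++ s ++ u).
Proof.
rewrite !catA; apply: teq_cat; [exact: teq_swap| exact: teq_refl].
Qed.

Lemma tneg_cancel s : TE (tneg s ++ s) [::].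
Proof.
elim: s => [|[m n] s IH] /=; first exact: teq_refl.
apply: (@teq_trans _ _ _ _ _ _ _ ([:: (- m, n); (m, n)] ++ (tneg s ++ s))).
  change (TE ([:: (- m, n)] ++ (tneg s ++ [:: (m, n)] ++ s))
    ([:: (- m, n)] ++ ([:: (m, n)] ++ tneg s ++ s))).
  apply: teq_cat; first exact: teq_refl.
  exact: teq_midswap.
rewrite -[[::]]/([::] ++ [::]); apply: teq_cat => //.
apply: (teq_trans (teq_sym (@teq_addl _ _ _ aM aN (fun _ => True) (- m) m n I I I))).
by rewrite addNr; apply: teq_zerol.
Qed.

Lemma taddA : associative tadd.
Proof.
move=> a b c; case: (tclassP a) => s ->; case: (tclassP b) => t ->;
case: (tclassP c) => u ->.
by rewrite -!tpi_cat' catA.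
Qed.

Lemma taddC : commutative tadd.
Proof.
move=> a b; case: (tclassP a) => s ->; case: (tclassP b) => t ->.
rewrite -!tpi_cat'; apply/tpi_eq; exact: teq_swap.
Qed.

Lemma tadd0 : left_id tzero tadd.
Proof. by move=> a; case: (tclassP a) => s ->; rewrite -tpi_cat'. Qed.

Lemma taddN : left_inverse tzero topp tadd.
Proof.
move=> a; rewrite /topp -{2}(treprK a) -tpi_cat'; apply/tpi_eq.
exact: tneg_cancel.
Qed.
End TensGen.

HB.instance Definition _ R M N aM aN := gen_eqMixin (@tclass R M N aM aN).
HB.instance Definition _ R M N aM aN := gen_choiceMixin (@tclass R M N aM aN).
HB.instance Definition _ R M N aM aN :=
  GRing.isZmodule.Build (@tclass R M N aM aN)
    (@taddA R M N aM aN) (@taddC R M N aM aN) (@tadd0 R M N aM aN) (@taddN R M N aM aN).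

Section TensLemmas.
Variables (R : Type) (M N : zmodType) (aM : M -> R -> M) (aN : R -> N -> N).
Local Notation TE := (teq aM aN (fun _ => True)).
Local Notation tp := (@tpi R M N aM aN).

Lemma tpi_cat s t : tp (s ++ t) = tp s + tp t.
Proof. exact: tpi_cat'. Qed.
Lemma tpi_nil : tp [::] = 0.
Proof. by []. Qed.
Lemma tpi_cons p s : tp (p :: s) = tp [:: p] + tp s.
Proof. by rewrite -tpi_cat. Qed.
Lemma tpi_sum s : tp s = \sum_(p <- s) tp [:: p].
Proof. elim: s => [|p s IH]; first by rewrite big_nil. by rewrite big_cons tpi_cons IH. Qed.
Lemma tpiDl m m' n : tp [:: (m + m', n)] = tp [:: (m, n)] + tp [:: (m', n)].
Proof. by rewrite -tpi_cat; apply/tpi_eq; apply: teq_addl. Qed.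
Lemma tpiDr m n n' : tp [:: (m, n + n')] = tp [:: (m, n)] + tp [:: (m, n')].
Proof. by rewrite -tpi_cat; apply/tpi_eq; apply: teq_addr. Qed.
Lemma tpi0l n : tp [:: (0, n)] = 0.
Proof. by apply/tpi_eq; apply: teq_zerol. Qed.
Lemma tpi0r m : tp [:: (m, 0)] = 0.
Proof. by apply/tpi_eq; apply: teq_zeror. Qed.
Lemma tpi_bal m r n : tp [:: (aM m r, n)] = tp [:: (m, aN r n)].
Proof. by apply/tpi_eq; apply: teq_bal. Qed.
Lemma tpiNl m n : tp [:: (- m, n)] = - tp [:: (m, n)].
Proof.
have h : tp [:: (- m, n)] + tp [:: (m, n)] = 0 by rewrite -tpiDl addNr tpi0l.
by rewrite -[LHS]addr0 -(subrr (tp [:: (m, n)])) addrA h add0r.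
Qed.
Lemma tpiBl m m' n : tp [:: (m - m', n)] = tp [:: (m, n)] - tp [:: (m', n)].
Proof. by rewrite tpiDl tpiNl. Qed.
End TensLemmas.

Record zpred (V : zmodType) := ZPred {
  zp : V -> Prop;
  zp0 : zp 0;
  zpD : forall a b, zp a -> zp b -> zp (a + b);
  zpN : forall a, zp a -> zp (- a) }.
Arguments zp {V}. Arguments zp0 {V}. Arguments zpD {V} z {a b}. Arguments zpN {V} z {a}.

Section SubGen.
Variables (V : zmodType) (S : zpred V).
Definition zsub := {v : V | zp S v}.
Definition zs0 : zsub := exist _ 0 (zp0 S).
Definition zsadd (a b : zsub) : zsub :=
  exist _ (proj1_sig a + proj1_sig b) (zpD S (proj2_sig a) (proj2_sig b)).
Definition zsopp (a : zsub) : zsub := exist _ (- proj1_sig a) (zpN S (proj2_sig a)).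
Lemma zsub_inj (a b : zsub) : proj1_sig a = proj1_sig b -> a = b.
Proof. by case: a => a ha; case: b => b hb /= e; apply: eq_exist. Qed.
Lemma zsaddA : associative zsadd.
Proof. by move=> a b c; apply: zsub_inj; rewrite /= addrA. Qed.
Lemma zsaddC : commutative zsadd.
Proof. by move=> a b; apply: zsub_inj; rewrite /= addrC. Qed.
Lemma zsadd0 : left_id zs0 zsadd.
Proof. by move=> a; apply: zsub_inj; rewrite /= add0r. Qed.
Lemma zsaddN : left_inverse zs0 zsopp zsadd.
Proof. by move=> a; apply: zsub_inj; rewrite /= addNr. Qed.
End SubGen.

HB.instance Definition _ V S := gen_eqMixin (@zsub V S).
HB.instance Definition _ V S := gen_choiceMixin (@zsub V S).
HB.instance Definition _ V S :=
  GRing.isZmodule.Build (@zsub V S)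
    (@zsaddA V S) (@zsaddC V S) (@zsadd0 V S) (@zsaddN V S).

Lemma zsub_val_add V S (a b : @zsub V S) : proj1_sig (a + b) = proj1_sig a + proj1_sig b.
Proof. by []. Qed.
Lemma zsub_val0 V S : proj1_sig (0 : @zsub V S) = 0.
Proof. by []. Qed.

Lemma addf0 (V W : zmodType) (f : V -> W) :
  (forall a b, f (a + b) = f a + f b) -> f 0 = 0.
Proof. move=> h; have e := h 0 0; rewrite addr0 in e; apply: (addrI (f 0)); by rewrite -e addr0. Qed.
Arguments addf0 {V W f}.
Lemma addfN (V W : zmodType) (f : V -> W) :
  (forall a b, f (a + b) = f a + f b) -> forall a, f (- a) = - f a.
Proof.
move=> h a; have e := h (- a) a; rewrite addNr (addf0 h) in e.
by apply/eqP; rewrite -addr_eq0 -e.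
Qed.
Arguments addfN {V W f}.
Lemma addfB (V W : zmodType) (f : V -> W) :
  (forall a b, f (a + b) = f a + f b) -> forall a b, f (a - b) = f a - f b.
Proof. by move=> h a b; rewrite h (addfN h). Qed.
Arguments addfB {V W f}.
Arguments trepr {R M N aM aN}.
Arguments tclassP {R M N aM aN}.
Arguments treprK {R M N aM aN}.
Arguments trepr_teq {R M N aM aN}.
Arguments zsub {V}.
Arguments zsub_inj {V S a b}.
Lemma addsubsub (V : zmodType) (a b : V) : a + b - a - b = 0.
Proof. by rewrite [a + b]addrC addrK subrr. Qed.
Arguments tneg {M N}.
Lemma corr_helper (V : zmodType) (a b A C : V) : (a + A) - ((a - b) + C) = b + (A - C).
Proof. by rewrite opprD opprB addrACA [a + _]addrC subrK. Qed.

Section Main.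
Variables (k : comPzRingType) (X : Type) (B : X -> kalg k) (A : klincat k X).
Variable i : forall {x : X}, kcar (B x) -> khom A x x.
Variables (M : X -> X -> lmodType k) (ract : forall {x y z}, M x y -> khom A y z -> M x z).
Variable sigma : forall x y, M x y -> seq (M x x * khom A x y).
Variables (x y : X).
Hypothesis hi : kfunctor (@i).
Hypothesis hM : rAmodule (@ract).
Hypothesis hD : descent_datum (@i) (@ract) sigma.

Local Notation rB := (@ractB k X B A (@i) M (@ract) x x).
Local Notation lA z := (@lactB k X B A (@i) x z).
Local Notation TT z := (@tclass (kcar (B x)) (M x x) (khom A x z) rB (lA z)).
Local Notation pi z := (@tpi (kcar (B x)) (M x x) (khom A x z) rB (lA z)).
Local Notation TE z := (teq rB (lA z) (fun _ => True)).

Lemma ractDl x1 y1 z1 (m m' : M x1 y1) (a : khom A y1 z1) : ract (m + m') a = ract m a + ract m' a.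
Proof. by case: hM => h _; apply: h. Qed.
Lemma ractDr x1 y1 z1 (m : M x1 y1) (a a' : khom A y1 z1) : ract m (a + a') = ract m a + ract m a'.
Proof. by case: hM => _ [h _ _ _ _]; apply: h. Qed.
Lemma ractA x1 y1 z1 w1 (m : M x1 y1) (a : khom A y1 z1) (b : khom A z1 w1) :
  ract (ract m a) b = ract m (kcomp a b).
Proof. by case: hM => _ [_ _ _ h _]; apply: h. Qed.
Lemma ract1 x1 y1 (m : M x1 y1) : ract m (kidm A y1) = m.
Proof. by case: hM => _ [_ _ _ _ h]; apply: h. Qed.
Lemma ract0l x1 y1 z1 (a : khom A y1 z1) : ract (0 : M x1 y1) a = 0.
Proof.
have h : ract (0 : M x1 y1) a + ract 0 a = ract 0 a + 0 by rewrite -ractDl !addr0.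
exact: (addrI _ h).
Qed.
Lemma ract0r x1 y1 z1 (m : M x1 y1) : ract m (0 : khom A y1 z1) = 0.
Proof.
have h : ract m (0 : khom A y1 z1) + ract m 0 = ract m 0 + 0 by rewrite -ractDr !addr0.
exact: (addrI _ h).
Qed.
Lemma kcomp0l x1 y1 z1 (b : khom A y1 z1) : kcomp (0 : khom A x1 y1) b = 0.
Proof.
have h : kcomp (0 : khom A x1 y1) b + kcomp 0 b = kcomp 0 b + 0 by rewrite -kcompDl !addr0.
exact: (addrI _ h).
Qed.
Lemma iD (b b' : kcar (B x)) : i (b + b') = i b + i b'.
Proof. by case: (hi x). Qed.
Lemma iM (b b' : kcar (B x)) : i (kmul b b') = kcomp (i b) (i b').
Proof. by case: (hi x). Qed.
Lemma i1 : i (kone (B x)) = kidm A x.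
Proof. by case: (hi x). Qed.

Definition rmap {z} (a : khom A x z) (s : seq (M x x * khom A x x)) :=
  [seq (p.1, kcomp p.2 a) | p <- s].

Lemma rmap_teq z (a : khom A x z) s t : TE x s t -> TE z (rmap a s) (rmap a t).
Proof.
elim=> {s t} /=.
- by move=> s; apply: teq_refl.
- by move=> s t _ h; apply: teq_sym.
- by move=> s t u _ h1 _ h2; apply: teq_trans h1 h2.
- by move=> s1 t1 s2 t2 _ h1 _ h2; rewrite /rmap !map_cat; apply: teq_cat.
- by move=> s t; rewrite /rmap !map_cat; apply: teq_swap.
- by move=> m m' n _ _ _; apply: teq_addl.
- by move=> m n n' _; rewrite /= kcompDl; apply: teq_addr.
- by move=> n _; apply: teq_zerol.
- by move=> m _; rewrite /= kcomp0l; apply: teq_zeror.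
- by move=> m r n _ _; rewrite /= /lactB kcompA; apply: teq_bal.
Qed.


Lemma sig_add z (m m' : M x z) :
  pi z (sigma x z (m + m')) = pi z (sigma x z m) + pi z (sigma x z m').
Proof. case: hD => h _ _ _ _; rewrite -tpi_cat; apply/tpi_eq; exact: h. Qed.
Lemma sig0 z : pi z (sigma x z 0) = 0.
Proof. exact: (addf0 (@sig_add z)). Qed.
Lemma sig_ract z (m : M x x) (a : khom A x z) :
  pi z (sigma x z (ract m a)) = pi z (rmap a (sigma x x m)).
Proof. case: hD => _ _ h _ _; apply/tpi_eq; exact: h. Qed.

Definition aQ (q : TT x) (b : kcar (B x)) : TT x := pi x (rmap (i b) (trepr q)).
Lemma aQ_pi s b : aQ (pi x s) b = pi x (rmap (i b) s).
Proof. apply/tpi_eq; apply: rmap_teq; exact: trepr_teq. Qed.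
Lemma aQD q q' b : aQ (q + q') b = aQ q b + aQ q' b.
Proof.
case: (tclassP q) => s ->; case: (tclassP q') => t ->.
by rewrite -tpi_cat !aQ_pi /rmap map_cat tpi_cat.
Qed.
Lemma aQN q b : aQ (- q) b = - aQ q b.
Proof. exact: (addfN (fun q q' => aQD q q' b)). Qed.

Definition d (m : M x x) : TT x := pi x (sigma x x m) - pi x [:: (m, kidm A x)].
Lemma dD m m' : d (m + m') = d m + d m'.
Proof.
rewrite /d sig_add tpiDl opprD !addrA; congr (_ + _).
by rewrite -!addrA; congr (_ + _); rewrite addrC.
Qed.
Lemma d0 : d 0 = 0.
Proof. exact: (addf0 dD). Qed.
Lemma dN m : d (- m) = - d m.
Proof. exact: (addfN dD). Qed.
Lemma dB m m' : d (m - m') = d m - d m'.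
Proof. exact: (addfB dD). Qed.

Lemma d_lin m b : d (rB m b) = aQ (d m) b.
Proof.
rewrite /d aQD aQN aQ_pi aQ_pi /ractB sig_ract.
congr (_ - _).
rewrite -[ract m (i b)]/(rB m b) tpi_bal /lactB /= kcomp1l kcomp1r //.
Qed.

Lemma GM_d (m : M x x) : GM (@i) (@ract) sigma m <-> d m = 0.
Proof.
rewrite /GM /teqMA /d; split.
  by move/tpi_eq => ->; rewrite subrr.
by move/eqP; rewrite subr_eq0 => /eqP /tpi_eq.
Qed.


Lemma aQ0 b : aQ 0 b = 0.
Proof. exact: (addf0 (fun q q' => aQD q q' b)). Qed.

Lemma KG_D a b : d a = 0 -> d b = 0 -> d (a + b) = 0.
Proof. by move=> ha hb; rewrite dD ha hb addr0. Qed.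
Lemma KG_N a : d a = 0 -> d (- a) = 0.
Proof. by move=> ha; rewrite dN ha oppr0. Qed.
Definition KG : zpred (M x x) := @ZPred _ (fun m => d m = 0) d0 KG_D KG_N.
Local Notation G := (zsub KG).

Lemma aG_proof (g : G) b : zp KG (rB (proj1_sig g) b).
Proof. by rewrite /= d_lin (proj2_sig g) aQ0. Qed.
Definition aG (g : G) (b : kcar (B x)) : G := exist _ (rB (proj1_sig g) b) (aG_proof g b).

Lemma rmod_rB : rmod_over rB.
Proof.
split.
- by move=> p p' b; rewrite /ractB ractDl.
- by move=> p b b'; rewrite /ractB iD ractDr.
- by move=> p b b'; rewrite /ractB iM ractA.
- by move=> p; rewrite /ractB i1 ract1.
Qed.

Lemma rmod_aG : rmod_over aG.
Proof.
case: rmod_rB => h1 h2 h3 h4; split.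
- by move=> p p' b; apply: zsub_inj; rewrite /= h1.
- by move=> p b b'; apply: zsub_inj; rewrite /= h2.
- by move=> p b b'; apply: zsub_inj; rewrite /= h3.
- by move=> p; apply: zsub_inj; rewrite /= h4.
Qed.

Lemma rmod_aQ : rmod_over aQ.
Proof.
split.
- exact: aQD.
- move=> q b b'; case: (tclassP q) => s ->; rewrite !aQ_pi.
  elim: s => [|[m n] s IH]; first by rewrite /= addr0.
  by rewrite /= tpi_cons [pi x (_ :: rmap (i b) s)]tpi_cons
    [pi x (_ :: rmap (i b') s)]tpi_cons IH iD kcompDr tpiDr addrACA.
- move=> q b b'; case: (tclassP q) => s ->; rewrite !aQ_pi /rmap -map_comp.
  congr (pi x _); apply: eq_map => -[m n] /=; by rewrite iM kcompA.
- move=> q; case: (tclassP q) => s ->; rewrite aQ_pi; congr (pi x _).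
  by rewrite /rmap; elim: s => [|[m n] s IH] //=; rewrite IH i1 kcomp1r.
Qed.

Lemma sig_eps (s : seq (M x x * khom A x y)) :
  (forall p, p \in s -> GM (@i) (@ract) sigma p.1) ->
  pi y (sigma x y (epsM (@ract) s)) = pi y s.
Proof.
elim: s => [|[m a] s IH] hs; first by rewrite /epsM big_nil sig0.
rewrite /epsM big_cons sig_add sig_ract -/(epsM (@ract) s) IH; last first.
  by move=> p hp; apply: hs; rewrite inE hp orbT.
rewrite [pi y (_ :: s)]tpi_cons; congr (_ + _).
have hm : GM (@i) (@ract) sigma m by apply: (hs (m, a)); rewrite inE eqxx.
apply/tpi_eq; apply: teq_trans (@rmap_teq y a _ _ hm) _ => /=.
by rewrite kcomp1l; apply: teq_refl.
Qed.

Lemma eps_teq s t : TE y s t -> epsM (@ract) s = epsM (@ract) t.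
Proof.
rewrite /epsM; elim=> {s t}.
- by [].
- by move=> s t _ ->.
- by move=> s t u _ -> _ ->.
- by move=> s1 t1 s2 t2 _ h1 _ h2; rewrite !big_cat h1 h2.
- by move=> s t; rewrite !big_cat; apply: addrC.
- by move=> m m' n _ _ _; rewrite !big_cons !big_nil /= ractDl !addr0.
- by move=> m n n' _; rewrite !big_cons !big_nil /= ractDr !addr0.
- by move=> n _; rewrite !big_cons !big_nil /= ract0l !addr0.
- by move=> m _; rewrite !big_cons !big_nil /= ract0r !addr0.
- by move=> m r n _ _; rewrite !big_cons !big_nil /= /ractB /lactB ractA !addr0.
Qed.

Definition gof (m : M x x) : G :=
  match pselect (d m = 0) with left h => exist _ m h | right _ => 0 end.
Lemma gofK m : d m = 0 -> proj1_sig (gof m) = m.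
Proof. by rewrite /gof; case: pselect. Qed.

Lemma sub_to_GA u v : teq aG (lA y) (fun _ => True) u v ->
  teqGA (@i) (@ract) sigma [seq (proj1_sig q.1, q.2) | q <- u]
                          [seq (proj1_sig q.1, q.2) | q <- v].
Proof.
have hG : forall g : G, GM (@i) (@ract) sigma (proj1_sig g).
  by move=> g; apply/GM_d; exact: (proj2_sig g).
elim=> {u v}.
- by move=> s; apply: teq_refl.
- by move=> s t _ h; apply: teq_sym.
- by move=> s t u _ h1 _ h2; apply: teq_trans h1 h2.
- by move=> s1 t1 s2 t2 _ h1 _ h2; rewrite !map_cat; apply: teq_cat.
- by move=> s t; rewrite !map_cat; apply: teq_swap.
- move=> p p' n _ _ _ /=.
  exact: (@teq_addl _ _ _ _ _ _ (proj1_sig p) (proj1_sig p') n (hG p) (hG p') (hG (p + p'))).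
- by move=> p n n' _ /=; apply: teq_addr; apply: hG.
- by move=> n _ /=; exact: (@teq_zerol _ _ _ _ _ _ n (hG 0)).
- by move=> p _ /=; apply: teq_zeror; apply: hG.
- move=> p r n _ _ /=.
  exact: (@teq_bal _ _ _ _ _ _ (proj1_sig p) r n (hG p) (hG (aG p r))).
Qed.

Hypothesis hflat : flat_left (@lactB k X B A (@i) x y).

Lemma inj_part (s t : seq (M x x * khom A x y)) :
  (forall p, p \in s -> GM (@i) (@ract) sigma p.1) ->
  (forall p, p \in t -> GM (@i) (@ract) sigma p.1) ->
  epsM (@ract) s = epsM (@ract) t -> teqGA (@i) (@ract) sigma s t.
Proof.
move=> hs ht e.
have e' : pi y s = pi y t by rewrite -(sig_eps s hs) -(sig_eps t ht) e.
move/tpi_eq: e' => e'.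
pose lift (s : seq (M x x * khom A x y)) := [seq (gof q.1, q.2) | q <- s].
have liftK : forall s : seq (M x x * khom A x y),
    (forall p, p \in s -> GM (@i) (@ract) sigma p.1) ->
    [seq (proj1_sig q.1, q.2) | q <- lift s] = s.
  move=> s0; elim: s0 => [|[m a] s0 IH] h //=.
  rewrite gofK; last by apply/GM_d; apply: (h (m, a)); rewrite inE eqxx.
  by rewrite IH // => p hp; apply: h; rewrite inE hp orbT.
have H := hflat _ _ aG rB (fun g : G => proj1_sig g) rmod_aG rmod_rB
  (fun p p' => erefl) (fun p b => erefl) (fun p p' e => zsub_inj e) (lift s) (lift t).
rewrite (liftK s hs) (liftK t ht) in H.
have := sub_to_GA _ _ (H e').
by rewrite (liftK s hs) (liftK t ht).
Qed.


Lemma pinil z : pi z [::] = 0.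
Proof. by []. Qed.

Lemma IQ0 : exists m, (0 : TT x) = d m.
Proof. by exists 0; rewrite d0. Qed.
Lemma IQD a b : (exists m, a = d m) -> (exists m, b = d m) -> exists m, a + b = d m.
Proof. by move=> [m ->] [m' ->]; exists (m + m'); rewrite dD. Qed.
Lemma IQN a : (exists m, a = d m) -> exists m, - a = d m.
Proof. by move=> [m ->]; exists (- m); rewrite dN. Qed.
Definition IQ : zpred (TT x) := @ZPred _ (fun q => exists m, q = d m) IQ0 IQD IQN.
Local Notation P := (zsub IQ).

Lemma aP_proof (p : P) b : zp IQ (aQ (proj1_sig p) b).
Proof. case: p => q hq /=; case: hq => m e; exists (rB m b); by rewrite e d_lin. Qed.
Definition aP (p : P) (b : kcar (B x)) : P := exist _ (aQ (proj1_sig p) b) (aP_proof p b).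

Lemma rmod_aP : rmod_over aP.
Proof.
case: rmod_aQ => h1 h2 h3 h4; split.
- by move=> p p' b; apply: zsub_inj; rewrite /= h1.
- by move=> p b b'; apply: zsub_inj; rewrite /= h2.
- by move=> p b b'; apply: zsub_inj; rewrite /= h3.
- by move=> p; apply: zsub_inj; rewrite /= h4.
Qed.

Definition dsub (m : M x x) : P := exist _ (d m) (ex_intro _ m erefl).
Definition pre (p : P) : M x x := projT1 (cid (proj2_sig p)).
Lemma pre_spec (p : P) : proj1_sig p = d (pre p).
Proof. by rewrite /pre; case: (cid _). Qed.

Local Notation piQN := (@tpi (kcar (B x)) (TT x) (khom A x y) aQ (lA y)).

Definition tau (u : seq (M x x * khom A x x * khom A x y)) :=
  [seq (pi x [:: (p.1.1, p.1.2)], p.2) | p <- u].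

Lemma aQ_single m q b : pi x [:: (m, kcomp q (i b))] = aQ (pi x [:: (m, q)]) b.
Proof. by rewrite aQ_pi. Qed.

Lemma tau_teq u v : teq3 rB (lA x) (fun (a : khom A x x) b => kcomp a (i b)) (lA y) u v ->
  piQN (tau u) = piQN (tau v).
Proof.
elim=> {u v}.
- by [].
- by move=> s t _ ->.
- by move=> s t u _ -> _ ->.
- by move=> s1 t1 s2 t2 _ h1 _ h2; rewrite /tau !map_cat !tpi_cat -/(tau _) h1 h2.
- by move=> s t; rewrite /tau !map_cat !tpi_cat addrC.
- by move=> m m' q n; rewrite /tau /= tpiDl tpiDl [RHS]tpi_cons.
- by move=> m q q' n; rewrite /tau /= tpiDr tpiDl [RHS]tpi_cons.
- by move=> m q n n'; rewrite /tau /= tpiDr [RHS]tpi_cons.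
- by move=> q n; rewrite /tau /= tpi0l tpi0l.
- by move=> m n; rewrite /tau /= tpi0r tpi0l.
- by move=> m q; rewrite /tau /= tpi0r.
- by move=> m r q n; rewrite /tau /= tpi_bal.
- by move=> m q s n; rewrite /tau /= aQ_single tpi_bal.
Qed.

Lemma piQN_inner (u : seq (M x x * khom A x x)) n :
  piQN [seq (pi x [:: (q.1, q.2)], n) | q <- u] = piQN [:: (pi x u, n)].
Proof.
elim: u => [|[m a] u IH] /=; first by rewrite pinil tpi0l.
by rewrite tpi_cons IH -tpiDl -tpi_cons.
Qed.

Lemma tau_flat (L : seq (M x x * khom A x y)) :
  piQN (tau (flatten [seq [seq (q.1, q.2, p.2) | q <- sigma x x p.1] | p <- L])) =
  \sum_(p <- L) piQN [:: (pi x (sigma x x p.1), p.2)].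
Proof.
elim: L => [|p L IH]; first by rewrite big_nil.
rewrite /= /tau map_cat tpi_cat -/(tau _) IH big_cons; congr (_ + _).
rewrite -piQN_inner /tau; congr (piQN _).
by elim: (sigma x x p.1) => //= q u ->.
Qed.

Lemma tau_one (L : seq (M x x * khom A x y)) :
  piQN (tau [seq (p.1, kidm A x, p.2) | p <- L]) =
  \sum_(p <- L) piQN [:: (pi x [:: (p.1, kidm A x)], p.2)].
Proof. by rewrite /tau -map_comp tpi_sum big_map. Qed.

Lemma key_zero (m : M x y) :
  piQN [seq (d p.1, p.2) | p <- sigma x y m] = 0.
Proof.
rewrite tpi_sum big_map.
under eq_bigr do rewrite /d tpiBl.
rewrite sumrB -tau_flat -tau_one; apply/eqP; rewrite subr_eq0; apply/eqP.
apply: tau_teq; case: hD => _ _ _ h _; exact: h.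
Qed.

Definition kerl (g : seq (M x x * khom A x y)) := forall p, p \in g -> d p.1 = 0.
Definition liftP (u : seq (P * khom A x y)) := [seq (pre q.1, q.2) | q <- u].

Lemma tpi_neg (g : seq (M x x * khom A x y)) : pi y (tneg g) = - pi y g.
Proof.
elim: g => [|[m n] g IH]; first by rewrite /= pinil oppr0.
by rewrite /= tpi_cons IH tpiNl [pi y (_ :: g)]tpi_cons opprD.
Qed.

Lemma kerl_neg g : kerl g -> kerl (tneg g).
Proof.
move=> h p /mapP [q hq ->] /=; by rewrite dN (h q hq) oppr0.
Qed.
Lemma kerl_cat g g' : kerl g -> kerl g' -> kerl (g ++ g').
Proof. by move=> h h' p; rewrite mem_cat => /orP [/h | /h']. Qed.
Lemma kerl1 m n : d m = 0 -> kerl [:: (m, n)].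
Proof. by move=> h p; rewrite inE => /eqP ->. Qed.

Lemma lift_teq u v : teq aP (lA y) (fun _ => True) u v ->
  exists g, kerl g /\ pi y (liftP u) - pi y (liftP v) = pi y g.
Proof.
have k0 : kerl [::] by [].
elim=> {u v}.
- by move=> s; exists [::]; rewrite subrr.
- move=> s t _ [g [hg e]]; exists (tneg g); split; first exact: kerl_neg.
  by rewrite tpi_neg -e opprB.
- move=> s t u _ [g [hg e]] _ [g' [hg' e']]; exists (g ++ g'); split.
    exact: kerl_cat.
  by rewrite tpi_cat -e -e' addrA subrK.
- move=> s1 t1 s2 t2 _ [g [hg e]] _ [g' [hg' e']]; exists (g ++ g'); split.
    exact: kerl_cat.
  by rewrite /liftP !map_cat !tpi_cat -/(liftP _) -e -e' opprD addrACA.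
- move=> s t; exists [::]; split => //.
  by rewrite /liftP !map_cat !tpi_cat [X in _ - X]addrC subrr.
- move=> p p' n _ _ _; exists [:: (pre (p + p') - pre p - pre p', n)]; split.
    apply: kerl1; rewrite !dB -!pre_spec /=; exact: addsubsub.
  by rewrite /liftP /= !tpiBl [pi y [:: _; _]]tpi_cons opprD addrA.
- move=> p n n' _; exists [::]; split => //.
  by rewrite /liftP /= tpiDr [pi y [:: _; _]]tpi_cons subrr.
- move=> n _; exists [:: (pre 0, n)]; split.
    by apply: kerl1; rewrite -pre_spec.
  by rewrite /liftP /= pinil subr0.
- move=> p _; exists [::]; split => //.
  by rewrite /liftP /= tpi0r pinil subrr.
- move=> p r n _ _; exists [:: (pre (aP p r) - rB (pre p) r, n)]; split.
    by apply: kerl1; rewrite dB -pre_spec d_lin -pre_spec /= subrr.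
  by rewrite /liftP /= -tpi_bal tpiBl.
Qed.

Lemma lift_corr (L : seq (M x x * khom A x y)) :
  pi y (liftP [seq (dsub p.1, p.2) | p <- L]) -
  pi y [seq (pre (dsub p.1) - p.1, p.2) | p <- L] = pi y L.
Proof.
elim: L => [|[m n] L IH]; first by rewrite /= subrr.
rewrite /liftP /= tpi_cons [pi y (_ :: [seq _ | _ <- L])]tpi_cons
  [pi y (_ :: L)]tpi_cons -IH /liftP tpiBl.
by rewrite corr_helper.
Qed.

Lemma surj_part (m : M x y) : exists s : seq (M x x * khom A x y),
  (forall p, p \in s -> GM (@i) (@ract) sigma p.1) /\ epsM (@ract) s = m.
Proof.
set S := sigma x y m.
have H := hflat _ _ aP aQ (fun q : P => proj1_sig q) rmod_aP rmod_aQ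
  (fun p p' => erefl) (fun p b => erefl) (fun p p' e => zsub_inj e)
  [seq (dsub p.1, p.2) | p <- S] [::].
have H' : teq aP (lA y) (fun _ => True) [seq (dsub p.1, p.2) | p <- S] [::].
  apply: H; apply/tpi_eq; rewrite -map_comp /=.
  exact: key_zero.
case: (lift_teq _ _ H') => g [hg e].
set c := [seq (pre (dsub p.1) - p.1, p.2) | p <- S].
have hc : kerl c.
  move=> p /mapP [q _ ->] /=; by rewrite dB -pre_spec subrr.
exists (g ++ tneg c); split.
  move=> p hp; apply/GM_d; exact: (kerl_cat _ _ hg (kerl_neg _ hc) p hp).
have ep : pi y (g ++ tneg c) = pi y S.
  by rewrite tpi_cat tpi_neg -e -(lift_corr S) /liftP /= pinil subr0.
rewrite (eps_teq _ _ (proj1 (tpi_eq _ _ _ _ _ _ _) ep)).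
by case: hD => _ _ _ _ h; exact: h.
Qed.

End Main.

Theorem proposition2p3 (k : comPzRingType) (X : Type) (B : X -> kalg k)
  (A : klincat k X) (i : forall {x}, kcar (B x) -> khom A x x)
  (M : X -> X -> lmodType k) (ract : forall {x y z}, M x y -> khom A y z -> M x z)
  (sigma : forall x y, M x y -> seq (M x x * khom A x y)) (x y : X) :
  kfunctor (@i) ->
  rAmodule (@ract) ->
  flat_left (@lactB k X B A (@i) x y) ->
  descent_datum (@i) (@ract) sigma ->
  (* epsilon^M_xy : G(M)_x (x)_{B_x} A_xy -> M_xy is surjective ... *)
  (forall m : M x y, exists s : seq (M x x * khom A x y),
      (forall p, p \in s -> GM (@i) (@ract) sigma p.1) /\ epsM (@ract) s = m) /\
  (* ... and injective *)
  (forall s t : seq (M x x * khom A x y),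
      (forall p, p \in s -> GM (@i) (@ract) sigma p.1) ->
      (forall p, p \in t -> GM (@i) (@ract) sigma p.1) ->
      epsM (@ract) s = epsM (@ract) t -> teqGA (@i) (@ract) sigma s t).
Proof.
move=> hi hM hflat hD; split.
- move=> m; eapply surj_part; eassumption.
- move=> s t hs ht e; eapply inj_part; eassumption.
Qed.
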